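(* Let $\mathsf{Mon}$ be the category of monoids and monoid homomorphisms, and let $S$ be the class of Schreier split epimorphisms in $\mathsf{Mon}$. Then for every monoid homomorphism $h\colon E\to B$, the change-of-base functor $h^*\colon SPt_B(\mathsf{Mon})\to SPt_E(\mathsf{Mon})$ (given by pulling back along $h$) has a right adjoint. That is, $\mathsf{Mon}$ is $S$-locally algebraically cartesian closed.
   Context: A point in a category $\mathcal{C}$ is a 4-tuple $(A,B,f,s)$ with $f\colon A\to B$, $s\colon B\to A$, $fs=1_B$; morphisms of points $(A,B,f,s)\to(A',B',f',s')$ are pairs $(g,h)$ with $hf=f'g$ and $gs=s'h$. For a fixed object $B$, $Pt_B(\mathcal{C})$ is the category of points with codomain $B$ and morphisms of the form $(g,1_B)$. For a morphism $h\colon E\to B$, the change-of-base functor $h^*\colon Pt_B(\mathcal C)\to Pt_E(\mathcal C)$ sends a point over $B$ to its pullback along $h$ (with the induced section). A split epimorphism $(A,B,f,s)$ of monoids (written additively, neutral element $0$) is a Schreier split epimorphism if for every $a\in A$ there exists a unique $\alpha\in\mathrm{Ker}(f)$ with $a=\alpha+sf(a)$. The class $S$ of Schreier split epimorphisms is stable under pullback; $SPt_B(\mathsf{Mon})$ denotes the full subcategory of $Pt_B(\mathsf{Mon})$ of points in $S$, and $h^*$ restricts to these subcategories. *)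

(* Defs.v *)
From Stdlib Require Import ProofIrrelevance.

Set Implicit Arguments.
Unset Strict Implicit.

(* Monoids, written additively (operation [mop], neutral element [mzero]);
   not assumed commutative. *)
Record monoid := Monoid {
  mcar :> Type;
  mop : mcar -> mcar -> mcar;
  mzero : mcar;
  massoc : forall x y z, mop x (mop y z) = mop (mop x y) z;
  madd0 : forall x, mop x mzero = x;
  madd0l : forall x, mop mzero x = x
}.
Arguments mop {m}.
Arguments mzero {m}.

Record mhom (M N : monoid) := MHom {
  hmap :> M -> N;
  hop : forall x y, hmap (mop x y) = mop (hmap x) (hmap y);
  hzero : hmap mzero = mzero
}.

Record point (B : monoid) := Point {
  pA : monoid;
  pf : mhom pA B;
  ps : mhom B pA;
  psplit : forall b, pf (ps b) = b
}.

Definition schreier (B : monoid) (P : point B) : Prop :=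
  forall a : pA P,
    exists! alpha : pA P, pf P alpha = mzero /\ a = mop alpha (ps P (pf P a)).

Record pmor (B : monoid) (P Q : point B) := PMor {
  pm :> mhom (pA P) (pA Q);
  pm_f : forall a, pf Q (pm a) = pf P a;
  pm_s : forall b, pm (ps P b) = ps Q b
}.

Section Pullback.
Variables (E B : monoid) (h : mhom E B) (P : point B).

Definition pbcar := { p : E * pA P | h (fst p) = pf P (snd p) }.

Definition pbop (x y : pbcar) : pbcar.
Proof.
  refine (exist _ (mop (fst (proj1_sig x)) (fst (proj1_sig y)),
                   mop (snd (proj1_sig x)) (snd (proj1_sig y))) _).
  simpl. rewrite !hop. destruct x as [[e a] Hx], y as [[e' a'] Hy]; simpl in *.
  now rewrite Hx, Hy.
Defined.

Definition pbzero : pbcar.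
Proof.
  refine (exist _ (mzero, mzero) _). simpl. now rewrite !hzero.
Defined.

Lemma pb_eq (x y : pbcar) : proj1_sig x = proj1_sig y -> x = y.
Proof.
  destruct x as [p Hp], y as [q Hq]; simpl; intros ->.
  now rewrite (proof_irrelevance _ Hp Hq).
Qed.

Definition pbmon : monoid.
Proof.
  refine (@Monoid pbcar pbop pbzero _ _ _); intros;
  apply pb_eq; simpl; now rewrite ?massoc, ?madd0, ?madd0l, <- ?surjective_pairing.
Defined.

Definition pbfst : mhom pbmon E.
Proof.
  refine (@MHom pbmon E (fun x => fst (proj1_sig x)) _ _); reflexivity.
Defined.

Definition pbsec_fun (e : E) : pbmon.
Proof.
  refine (exist _ (e, ps P (h e)) _). simpl. now rewrite psplit.
Defined.

Definition pbsec : mhom E pbmon.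
Proof.
  refine (@MHom E pbmon pbsec_fun _ _); intros; apply pb_eq; simpl;
  now rewrite ?hop, ?hzero.
Defined.

Definition pb : point E := @Point E pbmon pbfst pbsec (fun e => eq_refl).
End Pullback.

Section PullbackMor.
Variables (E B : monoid) (h : mhom E B) (P Q : point B) (g : pmor P Q).

Definition pbmor_fun (x : pbmon h P) : pbmon h Q.
Proof.
  refine (exist _ (fst (proj1_sig x), g (snd (proj1_sig x))) _).
  simpl. rewrite pm_f. exact (proj2_sig x).
Defined.

Definition pbmor_hom : mhom (pbmon h P) (pbmon h Q).
Proof.
  refine (@MHom _ _ pbmor_fun _ _); intros; apply pb_eq; simpl;
  now rewrite ?hop, ?hzero.
Defined.

Definition pbmor : pmor (pb h P) (pb h Q).
Proof.
  refine (@PMor E (pb h P) (pb h Q) pbmor_hom _ _).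
  - intros; reflexivity.
  - intros b; apply pb_eq; simpl; now rewrite pm_s.
Defined.
End PullbackMor.

(* Main.v *)
Require Import Defs.
From Stdlib Require Import ProofIrrelevance FunctionalExtensionality ClassicalEpsilon.
Set Implicit Arguments.

Definition Gprop (E B : monoid) (h : mhom E B) (Y : point E) (p : (B -> pA Y) * B) : Prop :=
  (forall x, pf Y (fst p x) = mzero) /\
  (forall e x, mop (ps Y e) (fst p x) = mop (fst p (mop (h e) x)) (ps Y e)).

Definition Gcar (E B : monoid) (h : mhom E B) (Y : point E) := {p | Gprop h Y p}.

Lemma G_eq (E B : monoid) (h : mhom E B) (Y : point E) (x y : Gcar h Y) :
  (forall z, fst (proj1_sig x) z = fst (proj1_sig y) z) -> snd (proj1_sig x) = snd (proj1_sig y) -> x = y.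
Proof.
  destruct x as [[u b] Hx], y as [[v c] Hy]; simpl; intros H1 H2.
  assert (u = v) by (apply functional_extensionality; auto). subst.
  now rewrite (proof_irrelevance _ Hx Hy).
Qed.

Definition Gop (E B : monoid) (h : mhom E B) (Y : point E) (x y : Gcar h Y) : Gcar h Y.
Proof.
  refine (exist _ ((fun z => mop (fst (proj1_sig x) z) (fst (proj1_sig y) (mop z (snd (proj1_sig x))))),
                   mop (snd (proj1_sig x)) (snd (proj1_sig y))) _).
  destruct x as [[u b] [Hu1 Hu2]], y as [[v c] [Hv1 Hv2]]; unfold Gprop; simpl in *; split.
  - intro z. rewrite (hop (pf Y)), Hu1, Hv1. apply madd0.
  - intros e z. rewrite massoc, Hu2, <- !massoc, Hv2, !massoc. reflexivity.
Defined.

Definition Gzero (E B : monoid) (h : mhom E B) (Y : point E) : Gcar h Y.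
Proof.
  refine (exist _ ((fun _ => mzero), mzero) _). split; simpl.
  - intros; apply hzero.
  - intros; now rewrite madd0, madd0l.
Defined.

Definition Gmon (E B : monoid) (h : mhom E B) (Y : point E) : monoid.
Proof.
  refine (@Monoid (Gcar h Y) (@Gop E B h Y) (@Gzero E B h Y) _ _ _); intros;
  apply G_eq; simpl; intros; rewrite ?massoc, ?madd0, ?madd0l; try reflexivity.
Defined.

Definition Gf (E B : monoid) (h : mhom E B) (Y : point E) : mhom (Gmon h Y) B.
Proof. refine (@MHom (Gmon h Y) B (fun x => snd (proj1_sig x)) _ _); reflexivity. Defined.

Definition Gs_fun (E B : monoid) (h : mhom E B) (Y : point E) (b : B) : Gmon h Y.
Proof.
  refine (exist _ ((fun _ => mzero), b) _). split; simpl.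
  - intros; apply hzero.
  - intros; now rewrite madd0, madd0l.
Defined.

Definition Gs (E B : monoid) (h : mhom E B) (Y : point E) : mhom B (Gmon h Y).
Proof.
  refine (@MHom B (Gmon h Y) (@Gs_fun E B h Y) _ _); intros; apply G_eq; simpl; intros;
  rewrite ?madd0; reflexivity.
Defined.

Definition GY (E B : monoid) (h : mhom E B) (Y : point E) : point B :=
  @Point B (Gmon h Y) (Gf h Y) (Gs h Y) (fun b => eq_refl).

Lemma GY_schreier (E B : monoid) (h : mhom E B) (Y : point E) : schreier (GY h Y).
Proof.
  intros [[u b] Hp].
  assert (Hk : Gprop h Y (u, mzero)) by exact Hp.
  exists (exist _ (u, mzero) Hk). split.
  - split; [reflexivity|]. apply G_eq; simpl; intros.
    + rewrite madd0. reflexivity.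
    + now rewrite madd0l.
  - intros [[v c] Hq] [H1 H2]. simpl in H1. subst c.
    apply G_eq; simpl; [intros z|].
    + apply (f_equal (fun x : Gmon h Y => fst (proj1_sig x) z)) in H2. simpl in H2.
      rewrite madd0 in H2. auto.
    + reflexivity.
Qed.

Definition eps_fun (E B : monoid) (h : mhom E B) (Y : point E) (x : pbmon h (GY h Y)) : pA Y :=
  mop (fst (proj1_sig (snd (proj1_sig x))) mzero) (ps Y (fst (proj1_sig x))).

Definition eps_hom (E B : monoid) (h : mhom E B) (Y : point E) : mhom (pbmon h (GY h Y)) (pA Y).
Proof.
  refine (@MHom _ _ (@eps_fun E B h Y) _ _).
  - intros [[e [[u b] [Hu1 Hu2]]] Hx] [[e' [[v c] [Hv1 Hv2]]] Hy].
    unfold eps_fun; simpl in *. rewrite madd0l, (hop (ps Y)).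
    subst b. rewrite <- !massoc. f_equal. rewrite !massoc. f_equal.
    rewrite Hv2, madd0. reflexivity.
  - unfold eps_fun; simpl. rewrite hzero, madd0. reflexivity.
Defined.

Definition eps (E B : monoid) (h : mhom E B) (Y : point E) : pmor (pb h (GY h Y)) Y.
Proof.
  refine (@PMor E (pb h (GY h Y)) Y (eps_hom h Y) _ _).
  - intros [[e [[u b] [Hu1 Hu2]]] Hx]; simpl; unfold eps_fun; simpl.
    rewrite (hop (pf Y)), Hu1, madd0l, psplit. reflexivity.
  - intros e; simpl; unfold eps_fun; simpl. apply madd0l.
Defined.
Definition qspec (B : monoid) (X : point B) (q : pA X -> pA X) : Prop :=
  forall a, pf X (q a) = mzero /\ a = mop (q a) (ps X (pf X a)) /\
    forall al, pf X al = mzero -> a = mop al (ps X (pf X a)) -> al = q a.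

Lemma qspec_ex (B : monoid) (X : point B) : schreier X -> exists q, @qspec _ X q.
Proof.
  intros HX.
  exists (fun a => proj1_sig (constructive_indefinite_description _ (HX a))).
  intros a. destruct (constructive_indefinite_description _ (HX a)) as [al [[H1 H2] H3]]; simpl.
  repeat split; auto. intros al2 Ha Hb. symmetry. apply H3; auto.
Qed.


Lemma q_uniq (B : monoid) (X : point B) q (Hq : @qspec _ X q) a al :
  pf X al = mzero -> a = mop al (ps X (pf X a)) -> q a = al.
Proof. intros; symmetry; apply (Hq a); auto. Qed.

Lemma q_ker (B : monoid) (X : point B) q (Hq : @qspec _ X q) a : pf X (q a) = mzero.
Proof. apply Hq. Qed.

Lemma q_dec (B : monoid) (X : point B) q (Hq : @qspec _ X q) a : a = mop (q a) (ps X (pf X a)).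
Proof. apply Hq. Qed.

Lemma q_L (B : monoid) (X : point B) q (Hq : @qspec _ X q) al w :
  pf X al = mzero -> q (mop al w) = mop al (q w).
Proof.
  intros Ha. apply (q_uniq Hq).
  - rewrite (hop (pf X)), Ha, (q_ker Hq), madd0; reflexivity.
  - rewrite (hop (pf X)), Ha, madd0l, <- massoc, <- (q_dec Hq). reflexivity.
Qed.

Lemma q_R (B : monoid) (X : point B) q (Hq : @qspec _ X q) w c :
  q (mop w (ps X c)) = q w.
Proof.
  apply (q_uniq Hq); [apply (q_ker Hq)|].
  rewrite (hop (pf X)), psplit, (hop (ps X)), massoc, <- (q_dec Hq). reflexivity.
Qed.

Lemma q_s (B : monoid) (X : point B) q (Hq : @qspec _ X q) c : q (ps X c) = mzero.
Proof.
  apply (q_uniq Hq); [apply hzero|]. rewrite psplit, madd0l. reflexivity.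
Qed.

Lemma q_shift (B : monoid) (X : point B) q (Hq : @qspec _ X q) c w :
  mop (q (mop (ps X c) w)) (ps X c) = mop (ps X c) (q w).
Proof.
  rewrite (q_dec Hq w) at 1. rewrite massoc, (q_R Hq).
  rewrite (q_dec Hq (mop (ps X c) (q w))) at 2.
  rewrite (hop (pf X)), psplit, (q_ker Hq), madd0. reflexivity.
Qed.

Lemma q_split (B : monoid) (X : point B) q (Hq : @qspec _ X q) x a a' :
  q (mop (ps X x) (mop a a')) = mop (q (mop (ps X x) a)) (q (mop (ps X (mop x (pf X a))) a')).
Proof.
  rewrite massoc, (q_dec Hq (mop (ps X x) a)) at 1.
  rewrite (hop (pf X) (ps X x)), psplit, <- massoc, (q_L Hq); [reflexivity|apply (q_ker Hq)].
Qed.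

Definition pbk (E B : monoid) (h : mhom E B) (X : point B) (k : pA X) (Hk : pf X k = mzero) : pbmon h X.
Proof. refine (exist _ (mzero, k) _). simpl. rewrite hzero, Hk. reflexivity. Defined.

Lemma f_pbk (E B : monoid) (h : mhom E B) (X : point B) (Y : point E) (f : pmor (pb h X) Y)
  (k1 k2 : pA X) H1 H2 : k1 = k2 -> f (@pbk _ _ h X k1 H1) = f (@pbk _ _ h X k2 H2).
Proof. intros ->. now rewrite (proof_irrelevance _ H1 H2). Qed.

Definition u_fun (E B : monoid) (h : mhom E B) (X : point B) q (Hq : @qspec _ X q) (Y : point E)
  (f : pmor (pb h X) Y) (a : pA X) (x : B) : pA Y :=
  f (@pbk _ _ h X (q (mop (ps X x) a)) (q_ker Hq _)).

Definition g_fun (E B : monoid) (h : mhom E B) (X : point B) q (Hq : @qspec _ X q) (Y : point E)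
  (f : pmor (pb h X) Y) (a : pA X) : Gmon h Y.
Proof.
  refine (exist _ (u_fun Hq f a, pf X a) _). split; simpl.
  - intros x. unfold u_fun. rewrite pm_f. reflexivity.
  - intros e x. unfold u_fun.
    rewrite <- (pm_s f e). rewrite <- !(hop f). f_equal. apply pb_eq; simpl.
    rewrite madd0, madd0l. f_equal.
    rewrite (hop (ps X)), <- massoc, (q_shift Hq). reflexivity.
Defined.

Definition g_hom (E B : monoid) (h : mhom E B) (X : point B) q (Hq : @qspec _ X q) (Y : point E)
  (f : pmor (pb h X) Y) : mhom (pA X) (Gmon h Y).
Proof.
  refine (@MHom (pA X) (Gmon h Y) (g_fun Hq f) _ _).
  - intros a a'. apply G_eq; simpl; [intros z|].
    + unfold u_fun. rewrite <- (hop f). f_equal. apply pb_eq; simpl.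
      rewrite madd0. f_equal. apply (q_split Hq).
    + apply hop.
  - apply G_eq; simpl; [intros z|].
    + unfold u_fun. rewrite <- (hzero f). f_equal. apply pb_eq; simpl.
      rewrite madd0, (q_s Hq). reflexivity.
    + apply hzero.
Defined.

Definition g_mor (E B : monoid) (h : mhom E B) (X : point B) q (Hq : @qspec _ X q) (Y : point E)
  (f : pmor (pb h X) Y) : pmor X (GY h Y).
Proof.
  refine (@PMor B X (GY h Y) (g_hom Hq f) _ _).
  - intros a; reflexivity.
  - intros b. apply G_eq; simpl; [intros z|].
    + unfold u_fun. rewrite <- (hzero f). f_equal. apply pb_eq; simpl.
      rewrite <- (hop (ps X)), (q_s Hq). reflexivity.
    + apply psplit.
Defined.

Lemma triangle (E B : monoid) (h : mhom E B) (X : point B) q (Hq : @qspec _ X q) (Y : point E)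
  (f : pmor (pb h X) Y) :
  forall x, eps h Y (pbmor h (g_mor Hq f) x) = f x.
Proof.
  intros x. simpl. unfold eps_fun; simpl; unfold u_fun.
  rewrite <- (pm_s f), <- (hop f). f_equal. apply pb_eq; simpl.
  destruct x as [[e a] Hx]; simpl in *. rewrite madd0l, hzero, madd0l, Hx.
  rewrite <- (q_dec Hq). reflexivity.
Qed.

Lemma uniqueness (E B : monoid) (h : mhom E B) (X : point B) q (Hq : @qspec _ X q) (Y : point E)
  (f : pmor (pb h X) Y) :
  forall g' : pmor X (GY h Y),
    (forall x, eps h Y (pbmor h g' x) = f x) -> forall a, g' a = g_mor Hq f a.
Proof.
  intros g' H a.
  set (U := fun c => fst (proj1_sig (g' c))).
  assert (S1 : forall k (Hk : pf X k = mzero), U k mzero = f (@pbk _ _ h X k Hk)).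
  { intros k Hk. rewrite <- H. simpl. unfold eps_fun; simpl. rewrite hzero, madd0. reflexivity. }
  assert (S2 : forall z c, U (mop (ps X z) c) mzero = U c z).
  { intros z c. unfold U. rewrite (hop g'), (pm_s g'). simpl. rewrite madd0l, madd0l. reflexivity. }
  assert (S3 : forall k c y, U (mop k (ps X c)) y = U k y).
  { intros k c y. unfold U. rewrite (hop g'), (pm_s g'). simpl. apply madd0. }
  apply G_eq; [intros z|].
  - change (U a z = u_fun Hq f a z). rewrite <- S2. unfold u_fun.
    rewrite (q_dec Hq (mop (ps X z) a)) at 1. rewrite S3. apply S1.
  - apply (pm_f g').
Qed.

Theorem mainTheorem1 (E B : monoid) (h : mhom E B) :
  forall Y : point E, schreier Y ->
  exists (GY : point B) (eps : pmor (pb h GY) Y),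
    schreier GY /\
    forall (X : point B), schreier X ->
    forall f : pmor (pb h X) Y,
    exists g : pmor X GY,
      (forall x, eps (pbmor h g x) = f x) /\
      (forall g' : pmor X GY,
         (forall x, eps (pbmor h g' x) = f x) -> forall a, g' a = g a).
Proof.
  intros Y _. exists (GY h Y), (eps h Y). split; [apply GY_schreier|].
  intros X HX f. destruct (qspec_ex HX) as [q Hq].
  exists (g_mor Hq f). split; [apply triangle|apply uniqueness].
Qed.
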